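(* If $\iota\in\mathbb C$ satisfies $\iota^4=1$, then the balanced Chekhov–Fock algebra $\mathcal Z^\iota(\lambda)$ is commutative.
   Context: $S$ is a closed oriented surface $\bar S$ of genus $g$ minus $s\ge1$ points, $2-2g-s<0$; $\lambda$ is an ideal triangulation (triangulation of $\bar S$ with vertices exactly the removed points) with edges $\lambda_1,\dots,\lambda_n$. Let $a_{ij}\in\{0,1,2\}$ be the number of times an end of $\lambda_j$ immediately succeeds an end of $\lambda_i$ going counterclockwise around a puncture, $\sigma_{ij}=a_{ij}-a_{ji}$. For $\iota\in\mathbb C-\{0\}$, $\mathcal T^\iota(\lambda)$ is the algebra generated by $Z_i^{\pm1}$ with relations $Z_iZ_j=\iota^{2\sigma_{ij}}Z_jZ_i$, and the balanced Chekhov–Fock algebra $\mathcal Z^\iota(\lambda)$ is its subalgebra generated by the monomials $Z_1^{k_1}\cdots Z_n^{k_n}$ such that $k_{i_1}+k_{i_2}+k_{i_3}$ is even whenever $\lambda_{i_1},\lambda_{i_2},\lambda_{i_3}$ are the sides of a face of $\lambda$. *)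

(* Defs.v *)
From HB Require Import structures.
From mathcomp Require Import all_boot all_order all_algebra.
From mathcomp Require Import complex.
From mathcomp Require Import Rstruct.
From Stdlib Require Rdefinitions.


Import Order.TTheory GRing.Theory Num.Theory.
Local Open Scope ring_scope.

Definition C : Type := (Rdefinitions.R)[i].

(* An ideal triangulation lambda of S with edges lambda_0..lambda_{n-1} is   *)
(* described by its m faces; face f has three sides side f 0, side f 1,      *)
(* side f 2 (edge indices, with multiplicity, so self-folded faces allowed), *)
(* listed in counterclockwise order along the boundary of f for the          *)
(* orientation of S.  Two sides carrying the same edge are glued (in the     *)
(* orientation-reversing way), which produces the oriented surface.          *)
Record ideal_triangulation (n : nat) := IdealTriangulation {
  nfaces : nat;
  side : 'I_nfaces -> 'I_3 -> 'I_n
}.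
Arguments nfaces {n} _.
Arguments side {n} _ _ _.

Definition edges_twice {n} (lam : ideal_triangulation n) : Prop :=
  forall i : 'I_n,
    #|[set p : 'I_(nfaces lam) * 'I_3 | side lam p.1 p.2 == i]| = 2%N.

Definition face_adj {n} (lam : ideal_triangulation n) : rel 'I_(nfaces lam) :=
  fun f g => [exists c : 'I_3, exists d : 'I_3, side lam f c == side lam g d].

(* Well-formedness: a closed connected oriented surface is obtained, with    *)
(* vertices exactly the punctures; hyperbolicity 2-2g-s = #faces - #edges   *)
(* = -#faces/2 < 0 amounts to having at least one face.                      *)
Definition is_ideal_triangulation {n} (lam : ideal_triangulation n) : Prop :=
  [/\ edges_twice lam,
      (0 < nfaces lam)%N &
      forall f g : 'I_(nfaces lam), connect (face_adj lam) f g].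

(* a_ij : number of times an end of lambda_j immediately succeeds an end of  *)
(* lambda_i going counterclockwise around a puncture.  Each corner of a face *)
(* gives one such succession: at the corner of face f between side c and     *)
(* side c+1 (mod 3), going counterclockwise around the puncture, the end of  *)
(* side c immediately succeeds the end of side c+1.                          *)
Definition a_coef {n} (lam : ideal_triangulation n) (i j : 'I_n) : nat :=
  #|[set p : 'I_(nfaces lam) * 'I_3 |
      (side lam p.1 (ordS p.2) == i) && (side lam p.1 p.2 == j)]|.

Definition sigma {n} (lam : ideal_triangulation n) (i j : 'I_n) : int :=
  (a_coef lam i j)%:Z - (a_coef lam j i)%:Z.

Definition balanced {n} (lam : ideal_triangulation n) (k : 'I_n -> int) : Prop :=
  forall f : 'I_(nfaces lam),
    (2 %| \sum_(c < 3) k (side lam f c))%Z.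

(* The Chekhov-Fock algebra T^iota(lambda) is the C-algebra presented by     *)
(* generators Z_i^{+-1} and relations Z_i Z_j = iota^{2 sigma_ij} Z_j Z_i.  *)
(* We work with an arbitrary C-algebra A together with elements Z_i, Zinv_i  *)
(* satisfying these relations (the presented algebra being the universal    *)
(* such one).                                                                *)
Definition CF_relations {n} (lam : ideal_triangulation n) (iota : C)
    {A : algType C} (Z Zinv : 'I_n -> A) : Prop :=
  [/\ forall i, Z i * Zinv i = 1,
      forall i, Zinv i * Z i = 1 &
      forall i j, Z i * Z j = (iota ^ (2 * sigma lam i j)) *: (Z j * Z i)].

Definition zpow {n} {A : algType C} (Z Zinv : 'I_n -> A) (i : 'I_n) (k : int) : A :=
  match k with
  | Posz m => Z i ^+ m
  | Negz m => Zinv i ^+ m.+1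
  end.

Definition monomial {n} {A : algType C} (Z Zinv : 'I_n -> A) (k : 'I_n -> int) : A :=
  \prod_(i < n) zpow Z Zinv i (k i).

Inductive in_balanced_CF {n} (lam : ideal_triangulation n)
    {A : algType C} (Z Zinv : 'I_n -> A) : A -> Prop :=
  | bCF_mono k : balanced lam k -> in_balanced_CF lam Z Zinv (monomial Z Zinv k)
  | bCF_scal (c : C) : in_balanced_CF lam Z Zinv (c%:A)
  | bCF_add x y : in_balanced_CF lam Z Zinv x -> in_balanced_CF lam Z Zinv y ->
                  in_balanced_CF lam Z Zinv (x + y)
  | bCF_mul x y : in_balanced_CF lam Z Zinv x -> in_balanced_CF lam Z Zinv y ->
                  in_balanced_CF lam Z Zinv (x * y)
  | bCF_scale (c : C) x : in_balanced_CF lam Z Zinv x ->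
                  in_balanced_CF lam Z Zinv (c *: x).

(* Main.v *)
Require Import Defs.
From HB Require Import structures.
From mathcomp Require Import all_boot all_order all_algebra.
From mathcomp Require Import complex.
From mathcomp Require Import Rstruct.
From mathcomp Require Import ring.
Import GRing.Theory.

Local Open Scope ring_scope.


Section Alg.
Variable (A : algType C) (iota : C) (Hi : iota != 0).

Lemma pow_comm1 (u v : A) (d : C) : u * v = d *: (v * u) ->
  forall m, u ^+ m * v = d ^+ m *: (v * u ^+ m).
Proof.
move=> H; elim=> [|m IH]; first by rewrite !expr0 mulr1 mul1r scale1r.
rewrite exprSr -mulrA H -scalerAr (mulrA (u ^+ m)) IH -scalerAl scalerA -exprSr -mulrA.
by rewrite -exprS -exprSr.
Qed.

Lemma pow_comm (u v : A) (d : C) : u * v = d *: (v * u) ->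
  forall m p, u ^+ m * v ^+ p = d ^+ (m * p) *: (v ^+ p * u ^+ m).
Proof.
move=> H m; have H1 := pow_comm1 _ _ _ H m.
elim=> [|p IH]; first by rewrite !expr0 muln0 expr0 mulr1 mul1r scale1r.
rewrite exprSr mulrA IH -scalerAl.
have -> : v ^+ p * u ^+ m * v = v ^+ p * (u ^+ m * v) by rewrite mulrA.
rewrite H1 -scalerAr scalerA mulrA -exprD mulnS addnC.
by [].
Qed.

Lemma inv_right (x y y' : A) (e : int) : x * y = iota ^ e *: (y * x) ->
  y * y' = 1 -> y' * y = 1 -> x * y' = iota ^ (- e) *: (y' * x).
Proof.
move=> H h1 h2.
have E : y' * x = iota ^ e *: (x * y').
  transitivity (y' * (x * y) * y'); first by rewrite -!mulrA h1 mulr1.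
  by rewrite H -scalerAr -scalerAl !mulrA h2 mul1r.
rewrite E scalerA -exprzDr ?unitfE // addNr expr0z scale1r //.
Qed.

Lemma inv_left (x x' y : A) (e : int) : x * y = iota ^ e *: (y * x) ->
  x * x' = 1 -> x' * x = 1 -> x' * y = iota ^ (- e) *: (y * x').
Proof.
move=> H h1 h2.
have E : y * x' = iota ^ e *: (x' * y).
  transitivity (x' * (x * y) * x'); first by rewrite !mulrA h2 mul1r.
  by rewrite H -scalerAr -scalerAl -!mulrA h1 mulr1.
rewrite E scalerA -exprzDr ?unitfE // addNr expr0z scale1r //.
Qed.

Lemma powz (e : int) (m : nat) : (iota ^ e) ^+ m = iota ^ (e * m%:Z).
Proof. by rewrite -exprz_exp. Qed.

Lemma prod_comm_r (x : A) (I : Type) (g : I -> A) (e : I -> int) (r : seq I) :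
  (forall j, x * g j = iota ^ (e j) *: (g j * x)) ->
  x * \prod_(j <- r) g j = iota ^ (\sum_(j <- r) e j) *: (\prod_(j <- r) g j * x).
Proof.
move=> H; elim: r => [|a r IH].
  by rewrite !big_nil expr0z scale1r mulr1 mul1r.
rewrite !big_cons mulrA H -scalerAl.
have -> : g a * x * \prod_(j <- r) g j = g a * (x * \prod_(j <- r) g j) by rewrite mulrA.
by rewrite IH -scalerAr scalerA mulrA -exprzDr ?unitfE.
Qed.

Lemma prod_comm_l (Y : A) (I : Type) (f : I -> A) (e : I -> int) (r : seq I) :
  (forall i, f i * Y = iota ^ (e i) *: (Y * f i)) ->
  (\prod_(i <- r) f i) * Y = iota ^ (\sum_(i <- r) e i) *: (Y * \prod_(i <- r) f i).
Proof.
move=> H; elim: r => [|a r IH].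
  by rewrite !big_nil expr0z scale1r mulr1 mul1r.
rewrite !big_cons -mulrA IH -scalerAr.
have -> : f a * (Y * \prod_(i <- r) f i) = f a * Y * \prod_(i <- r) f i by rewrite mulrA.
rewrite H -scalerAl scalerA -exprzDr ?unitfE // addrC mulrA.
by [].
Qed.

Lemma prod_comm (I J : Type) (f : I -> A) (g : J -> A) (e : I -> J -> int)
   (r : seq I) (s : seq J) :
  (forall i j, f i * g j = iota ^ (e i j) *: (g j * f i)) ->
  (\prod_(i <- r) f i) * (\prod_(j <- s) g j) =
  iota ^ (\sum_(i <- r) \sum_(j <- s) e i j) *:
    ((\prod_(j <- s) g j) * \prod_(i <- r) f i).
Proof.
move=> H; apply: prod_comm_l => i; exact: prod_comm_r.
Qed.
End Alg.


Lemma zpow_comm n (lam : ideal_triangulation n) (iota : C) (Hi : iota != 0)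
    (A : algType C) (Z Zinv : 'I_n -> A)
    (HZ : CF_relations lam iota Z Zinv) i j (a b : int) :
  zpow Z Zinv i a * zpow Z Zinv j b =
  iota ^ (2 * sigma lam i j * (a * b)) *: (zpow Z Zinv j b * zpow Z Zinv i a).
Proof.
case: HZ => h1 h2 h3.
set e := 2 * sigma lam i j.
have B : Z i * Z j = iota ^ e *: (Z j * Z i) by apply: h3.
have B1 := inv_right _ _ Hi _ _ _ _ B (h1 j) (h2 j).
have B2 := inv_left _ _ Hi _ _ _ _ B (h1 i) (h2 i).
have B3 := inv_left _ _ Hi _ _ _ _ B1 (h1 i) (h2 i).
case: a => m; case: b => p; rewrite /zpow.
- by rewrite (pow_comm _ _ _ _ B) powz -PoszM.
- rewrite (pow_comm _ _ _ _ B1) powz; congr (iota ^ _ *: _); rewrite NegzE PoszM; ring.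
- rewrite (pow_comm _ _ _ _ B2) powz; congr (iota ^ _ *: _); rewrite NegzE PoszM; ring.
- rewrite (pow_comm _ _ _ _ B3) powz; congr (iota ^ _ *: _); rewrite !NegzE PoszM; ring.
Qed.


Lemma face3 (x y : 'I_3 -> int) :
  \sum_(c < 3) (x (ordS c) * y c - x c * y (ordS c)) =
  (\sum_(c < 3) x c) * (\sum_(c < 3) y c) - \sum_(c < 3) x c * y c
   - 2 * \sum_(c < 3) x c * y (ordS c).
Proof.
rewrite !big_ord_recl !big_ord0.
have e0 : ordS (ord0 : 'I_3) = lift ord0 ord0 by apply/val_inj.
have e1 : ordS (lift ord0 ord0 : 'I_3) = lift ord0 (lift ord0 ord0) by apply/val_inj.
have e2 : ordS (lift ord0 (lift ord0 ord0) : 'I_3) = ord0 by apply/val_inj.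
rewrite e0 e1 e2. ring.
Qed.

Section Comb.
Variables (n : nat) (lam : ideal_triangulation n).

Lemma sum_pairs (F : 'I_n -> 'I_n -> int) :
  \sum_(p : 'I_(nfaces lam) * 'I_3) F (side lam p.1 (ordS p.2)) (side lam p.1 p.2)
  = \sum_i \sum_j (a_coef lam i j)%:Z * F i j.
Proof.
rewrite pair_bigA /= (partition_big (fun p => (side lam p.1 (ordS p.2), side lam p.1 p.2)) xpredT) //=.
apply: eq_bigr => -[i j] _ /=.
rewrite (eq_bigr (fun _ => F i j)); last by move=> p /eqP [-> ->].
rewrite (eq_bigl (fun p => p \in [set p : 'I_(nfaces lam) * 'I_3 |
      (side lam p.1 (ordS p.2) == i) && (side lam p.1 p.2 == j)])); last first.
  by move=> p; rewrite inE /= xpair_eqE.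
by rewrite sumr_const -mulr_natl natz.
Qed.

Lemma count2 (Ht : edges_twice lam) (G : 'I_n -> int) :
  \sum_(p : 'I_(nfaces lam) * 'I_3) G (side lam p.1 p.2) = \sum_i 2 * G i.
Proof.
rewrite (partition_big (fun p => side lam p.1 p.2) xpredT) //=.
apply: eq_bigr => i _.
rewrite (eq_bigr (fun _ => G i)); last by move=> p /eqP ->.
rewrite (eq_bigl (fun p => p \in [set p : 'I_(nfaces lam) * 'I_3 |
      side lam p.1 p.2 == i])); last by move=> p; rewrite inE.
rewrite sumr_const Ht mulr2n; ring.
Qed.

Lemma parity (Ht : edges_twice lam) (k l : 'I_n -> int) :
  balanced lam k ->
  (2 %| \sum_i \sum_j sigma lam i j * (k i * l j))%Z.
Proof.
move=> Hk.
have -> : \sum_i \sum_j sigma lam i j * (k i * l j) =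
  \sum_i \sum_j (a_coef lam i j)%:Z * (k i * l j) -
  \sum_i \sum_j (a_coef lam i j)%:Z * (k j * l i).
  rewrite [X in _ = _ - X]exchange_big -sumrB; apply: eq_bigr => i _.
  rewrite -sumrB; apply: eq_bigr => j _; rewrite /sigma; ring.
rewrite -!sum_pairs -sumrB -(pair_bigA _ (fun f c => k (side lam f (ordS c)) * l (side lam f c) - k (side lam f c) * l (side lam f (ordS c)))) /=.
rewrite (eq_bigr (fun f => (\sum_(c < 3) k (side lam f c)) * (\sum_(c < 3) l (side lam f c))
   - \sum_(c < 3) k (side lam f c) * l (side lam f c)
   - 2 * \sum_(c < 3) k (side lam f c) * l (side lam f (ordS c)))); last first.
  by move=> f _; rewrite -face3.
rewrite !sumrB; apply: rpredB; last first.
  by rewrite -mulr_sumr; apply: dvdz_mulr; apply: dvdzz.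
apply: rpredB.
  by apply: rpred_sum => f _; apply: dvdz_mulr; apply: Hk.
rewrite (pair_bigA _ (fun f c => k (side lam f c) * l (side lam f c))) /=.
rewrite (count2 Ht (fun i => k i * l i)).
by apply: rpred_sum => i _; apply: dvdz_mulr; apply: dvdzz.
Qed.
End Comb.


Lemma comm_closure n (lam : ideal_triangulation n) (A : algType C) (Z Zinv : 'I_n -> A) (z : A) :
  (forall k, balanced lam k -> monomial Z Zinv k * z = z * monomial Z Zinv k) ->
  forall x, in_balanced_CF lam Z Zinv x -> x * z = z * x.
Proof.
move=> H x; elim => {x}.
- exact: H.
- by move=> c; rewrite -scalerAl mul1r -scalerAr mulr1.
- by move=> x y _ Hx _ Hy; rewrite mulrDl mulrDr Hx Hy.
- by move=> x y _ Hx _ Hy; rewrite -mulrA Hy mulrA Hx mulrA.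
- by move=> c x _ Hx; rewrite -scalerAl Hx scalerAr.
Qed.

Theorem corollary3p3 (n : nat) (lam : ideal_triangulation n)
    (Hlam : is_ideal_triangulation lam) (iota : C) (Hiota : iota ^+ 4 = 1)
    (A : algType C) (Z Zinv : 'I_n -> A)
    (HZ : CF_relations lam iota Z Zinv) :
  forall x y : A, in_balanced_CF lam Z Zinv x -> in_balanced_CF lam Z Zinv y ->
    x * y = y * x.
Proof.
have Hi : iota != 0.
  apply/eqP => h; move: Hiota; rewrite h expr0n /= => /eqP.
  by rewrite eq_sym oner_eq0.
case: Hlam => Ht _ _.
have MC : forall k l, balanced lam k ->
    monomial Z Zinv k * monomial Z Zinv l = monomial Z Zinv l * monomial Z Zinv k.
  move=> k l Hk.
  rewrite /monomial (prod_comm _ _ Hi _ _ _ _ (fun i j => 2 * sigma lam i j * (k i * l j))); last first.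
    by move=> i j; apply: zpow_comm.
  have [q Hq] := dvdzP (parity _ _ Ht k l Hk).
  have -> : \sum_(i < n) \sum_(j < n) 2 * sigma lam i j * (k i * l j) = 4 * q.
    rewrite (_ : 4 * q = 2 * (q * 2)); last by ring.
    rewrite -Hq mulr_sumr; apply: eq_bigr => i _.
    rewrite mulr_sumr; apply: eq_bigr => j _; ring.
  by rewrite -exprz_exp -[iota ^ 4]/(iota ^+ 4) Hiota exp1rz scale1r.
move=> x y Hx Hy.
apply: (comm_closure _ _ _ _ _ y _ x Hx) => k Hk.
symmetry; apply: (comm_closure _ _ _ _ _ (monomial Z Zinv k) _ y Hy) => l Hl.
by rewrite MC.
Qed.
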